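(* Let $(a_m)_{m\ge0}$ and $(b_n)_{n\ge0}$ be real sequences and let $f(x)=e^{-x/2}\sum_{m=0}^\infty a_mL_m(x)$, $g(x)=e^{-x/2}\sum_{n=0}^\infty b_nL_n(x)$ for $x\in[0,\infty)$, and $h(x)=\int_0^x f(x-t)g(t)\,\mathrm{d}t$. Computing the convolution termwise, $h(x)=e^{-x/2}\sum_{k=0}^\infty c_kL_k(x)$ with $\underline c=R^L\underline b$, where $R^L$ is the infinite matrix with entries $$R^L_{k,n}=a_{k-n}-a_{k-n-1}\qquad(k,n\ge0),\quad a_j:=0\text{ for }j<0,$$ i.e. $R^L$ is the lower triangular Toeplitz matrix with first column $(a_0,a_1,a_2,\dots)^T$ minus the same matrix shifted down by one row (first column $(0,a_0,a_1,\dots)^T$).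
   Context: $L_n$ denotes the Laguerre polynomial of degree $n$, $L_n(x)=\sum_{j=0}^n\binom{n}{j}\frac{(-x)^j}{j!}$; $e^{-x/2}L_n(x)$ are the weighted Laguerre functions. $\underline b=(b_0,b_1,\dots)^T$, $\underline c=(c_0,c_1,\dots)^T$. *)

(* Defs.v *)
From Stdlib Require Import Reals ZArith.
From Coquelicot Require Import Coquelicot.
Open Scope R_scope.

Definition Laguerre (n : nat) (x : R) : R :=
  sum_f_R0 (fun j => Binomial.C n j * (- x) ^ j / INR (fact j)) n.

Definition ext0 (a : nat -> R) (j : Z) : R :=
  if (j <? 0)%Z then 0 else a (Z.to_nat j).

Definition RL (a : nat -> R) (k n : nat) : R :=
  ext0 a (Z.of_nat k - Z.of_nat n)%Z - ext0 a (Z.of_nat k - Z.of_nat n - 1)%Z.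

Definition wLag (a : nat -> R) (x : R) : R :=
  exp (- x / 2) * Series (fun m => a m * Laguerre m x).

Definition RLmul (a b : nat -> R) (k : nat) : R :=
  Series (fun n => RL a k n * b n).

(* Main.v *)
Require Import Defs.
From Stdlib Require Import Reals Lra Lia Psatz ZArith.
From Coquelicot Require Import Coquelicot.
Open Scope R_scope.

Definition ee (j : nat) (t : R) : R := (- t) ^ j / INR (fact j).
Definition de (j : nat) (t : R) : R :=
  match j with O => 0 | S i => - ee i t end.
Definition cf (n j : nat) : R := if (j <=? n)%nat then Binomial.C n j else 0.

Lemma d_plus (f g : R -> R) x df dg : is_derive f x df -> is_derive g x dg ->
  is_derive (fun y => f y + g y) x (df + dg).
Proof. intros; apply (is_derive_plus f g); auto. Qed.
Lemma d_minus (f g : R -> R) x df dg : is_derive f x df -> is_derive g x dg ->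
  is_derive (fun y => f y - g y) x (df - dg).
Proof. intros; apply (is_derive_minus f g); auto. Qed.
Lemma d_mult (f g : R -> R) x df dg : is_derive f x df -> is_derive g x dg ->
  is_derive (fun y => f y * g y) x (df * g x + f x * dg).
Proof. intros; apply (is_derive_mult f g); auto. intros; apply Rmult_comm. Qed.
Lemma d_scal (f : R -> R) k x df : is_derive f x df ->
  is_derive (fun y => k * f y) x (k * df).
Proof. intros; apply (is_derive_scal f x k df); auto. Qed.
Lemma d_comp (f g : R -> R) x df dg : is_derive f (g x) df -> is_derive g x dg ->
  is_derive (fun y => f (g y)) x (dg * df).
Proof. intros; apply (is_derive_comp f g); auto. Qed.

Lemma ee_derive j t : is_derive (ee j) t (de j t).
Proof.
  destruct j as [|i]; unfold ee, de.
  - auto_derive; [exact I|]. simpl. field.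
  - auto_derive; [exact I|].
    unfold ee. replace (match i with | 0%nat => 1 | S _ => INR i + 1 end) with (INR (S i)) by (destruct i; reflexivity).
    replace (fact i + i * fact i)%nat with (S i * fact i)%nat by ring.
    rewrite mult_INR.
    assert (H1 := INR_fact_neq_0 i).
    assert (H2 : INR (S i) <> 0) by (apply not_0_INR; lia).
    field. split; auto.
Qed.

Lemma sum_derive (c : nat -> R) N t :
  is_derive (fun t => sum_f_R0 (fun j => c j * ee j t) N) t
            (sum_f_R0 (fun j => c j * de j t) N).
Proof.
  induction N as [|N IH]; simpl.
  - apply (d_scal (ee 0) (c 0%nat) t (de 0 t)), ee_derive.
  - apply (is_derive_plus (fun t => sum_f_R0 (fun j => c j * ee j t) N)
            (fun t => c (S N) * ee (S N) t)); [exact IH|].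
    apply (d_scal (ee (S N)) (c (S N)) t (de (S N) t)), ee_derive.
Qed.

Lemma cf_big n j : (n < j)%nat -> cf n j = 0.
Proof. intros H. unfold cf. destruct (Nat.leb_spec j n); [lia|reflexivity]. Qed.

Lemma sum_ext_le (f g : nat -> R) N :
  (forall j, (j <= N)%nat -> f j = g j) -> sum_f_R0 f N = sum_f_R0 g N.
Proof.
  induction N as [|N IH]; intros H; simpl.
  - apply H; lia.
  - rewrite IH by (intros; apply H; lia). rewrite H by lia. reflexivity.
Qed.

Lemma sum_zero_ext (f : nat -> R) n N :
  (n <= N)%nat -> (forall j, (n < j)%nat -> f j = 0) ->
  sum_f_R0 f N = sum_f_R0 f n.
Proof.
  intros HN Hz. induction HN as [|N HN IH]; [reflexivity|].
  simpl. rewrite IH, Hz by lia. ring.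
Qed.

Definition LS (n N : nat) (t : R) := sum_f_R0 (fun j => cf n j * ee j t) N.

Lemma Lag_LS n N t : (n <= N)%nat -> Laguerre n t = LS n N t.
Proof.
  intros H. unfold LS. rewrite (sum_zero_ext _ n N H).
  - unfold Laguerre. apply sum_ext_le. intros j Hj.
    unfold cf, ee. destruct (Nat.leb_spec j n); [|lia]. unfold Rdiv. ring.
  - intros j Hj. rewrite cf_big by lia. ring.
Qed.

Definition Ld (n : nat) (t : R) := sum_f_R0 (fun j => cf n j * de j t) n.

Lemma Lag_derive n t : is_derive (Laguerre n) t (Ld n t).
Proof.
  apply is_derive_ext with (f := LS n n).
  - intros; symmetry; apply Lag_LS; lia.
  - apply sum_derive.
Qed.

Lemma sum_shift (f : nat -> R) N :
  sum_f_R0 f (S N) = f 0%nat + sum_f_R0 (fun i => f (S i)) N.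
Proof. rewrite decomp_sum by lia. reflexivity. Qed.

Lemma C_nn n : Binomial.C n n = 1.
Proof.
  unfold Binomial.C. rewrite Nat.sub_diag. simpl.
  field. apply INR_fact_neq_0.
Qed.

Lemma C_n0 n : Binomial.C n 0 = 1.
Proof.
  unfold Binomial.C. rewrite Nat.sub_0_r. simpl.
  field. apply INR_fact_neq_0.
Qed.

Lemma cf_n0 n : cf n 0 = 1.
Proof. unfold cf. simpl. apply C_n0. Qed.

Lemma cf_pascal m i : cf (S m) (S i) = cf m i + cf m (S i).
Proof.
  unfold cf.
  destruct (Nat.leb_spec (S i) (S m)); destruct (Nat.leb_spec i m);
    destruct (Nat.leb_spec (S i) m); try lia.
  - symmetry; apply pascal; lia.
  - assert (i = m) by lia; subst. rewrite !C_nn. ring.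
  - ring.
Qed.

Lemma cf_mul m i : INR (S i) * cf (S m) (S i) = INR (S m) * cf m i.
Proof.
  unfold cf.
  destruct (Nat.leb_spec (S i) (S m)); destruct (Nat.leb_spec i m); try lia;
    [|ring].
  unfold Binomial.C. replace (S m - S i)%nat with (m - i)%nat by lia.
  change (fact (S m)) with (S m * fact m)%nat.
  change (fact (S i)) with (S i * fact i)%nat.
  rewrite !mult_INR.
  assert (H1 := INR_fact_neq_0 i). assert (H2 := INR_fact_neq_0 (m - i)).
  assert (H3 : INR (S i) <> 0) by (apply not_0_INR; lia).
  field. repeat split; auto.
Qed.

Lemma sum_opp (f : nat -> R) N : sum_f_R0 (fun j => - f j) N = - sum_f_R0 f N.
Proof. induction N as [|N IH]; simpl; [ring|rewrite IH; ring]. Qed.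

Lemma Ld_step m t : Ld (S m) t - Ld m t = - Laguerre m t.
Proof.
  unfold Ld. rewrite (Lag_LS m m t) by lia. unfold LS.
  assert (E : sum_f_R0 (fun j => cf m j * de j t) m =
              sum_f_R0 (fun j => cf m j * de j t) (S m)).
  { simpl. rewrite cf_big by lia. ring. }
  rewrite E, <- minus_sum, sum_shift. simpl de at 1.
  rewrite Rmult_0_r, Rmult_0_r, Rminus_0_r, Rplus_0_l.
  rewrite <- sum_opp.
  apply sum_ext_le. intros j _. simpl. rewrite cf_pascal. ring.
Qed.

Lemma t_ee i t : t * ee i t = - INR (S i) * ee (S i) t.
Proof.
  unfold ee. change (fact (S i)) with (S i * fact i)%nat. rewrite mult_INR.
  assert (H1 := INR_fact_neq_0 i).
  assert (H3 : INR (S i) <> 0) by (apply not_0_INR; lia).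
  simpl pow. field. split; auto.
Qed.

Lemma t_Ld m t : t * Ld (S m) t = INR (S m) * (Laguerre (S m) t - Laguerre m t).
Proof.
  rewrite (Lag_LS (S m) (S m)), (Lag_LS m (S m)) by lia.
  unfold Ld, LS. rewrite <- minus_sum, scal_sum, scal_sum.
  apply sum_ext_le. intros j _. destruct j as [|i].
  - simpl de. rewrite !cf_n0. ring.
  - simpl de.
    replace (cf (S m) (S i) * - ee i t * t) with (- cf (S m) (S i) * (t * ee i t)) by ring.
    rewrite t_ee.
    replace (- cf (S m) (S i) * (- INR (S i) * ee (S i) t)) with
      ((INR (S i) * cf (S m) (S i)) * ee (S i) t) by ring.
    rewrite cf_mul. rewrite (cf_pascal m i). ring.
Qed.

Lemma Lag_0 n : Laguerre n 0 = 1.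
Proof.
  rewrite (Lag_LS n n) by lia. unfold LS.
  assert (H : forall N, sum_f_R0 (fun j => cf n j * ee j 0) N = 1).
  { induction N as [|N IH]; simpl.
    - rewrite cf_n0. unfold ee. simpl. field.
    - rewrite IH. unfold ee. simpl. unfold Rdiv. rewrite Ropp_0, !Rmult_0_l, Rmult_0_r. ring. }
  apply H.
Qed.

Fixpoint sumL (m : nat) (s : R) : R :=
  match m with O => 0 | S k => sumL k s + Laguerre k s end.
Fixpoint sumLd (m : nat) (s : R) : R :=
  match m with O => 0 | S k => sumLd k s + Ld k s end.

Lemma d_const (c x : R) : is_derive (fun _ => c) x 0.
Proof. auto_derive; auto. Qed.

Lemma d_id (x : R) : is_derive (fun s => s) x 1.
Proof. auto_derive; auto. Qed.

Lemma Ld_sum m t : Ld m t = - sumL m t.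
Proof.
  induction m as [|m IH].
  - unfold Ld. simpl. ring.
  - assert (H := Ld_step m t). simpl. lra.
Qed.

Lemma sumL_derive m t : is_derive (sumL m) t (sumLd m t).
Proof.
  induction m as [|m IH]; simpl.
  - apply is_derive_ext with (f := fun _ => 0); [reflexivity|]. apply d_const.
  - apply (d_plus (sumL m) (Laguerre m)); auto. apply Lag_derive.
Qed.

Lemma Ld_derive m t : is_derive (Ld m) t (- sumLd m t).
Proof.
  apply is_derive_ext with (f := fun s => - sumL m s).
  - intros; rewrite Ld_sum; reflexivity.
  - apply (is_derive_opp (sumL m)), sumL_derive.
Qed.

Lemma is_derive_eq (f : R -> R) (x d1 d2 : R) : is_derive f x d1 -> d1 = d2 -> is_derive f x d2.
Proof. intros H ->; exact H. Qed.

Lemma ode m t :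
  t * (- sumLd (S m) t) = - Ld (S m) t + t * Ld (S m) t - INR (S m) * Laguerre (S m) t.
Proof.
  set (N := INR (S m)).
  assert (D1 : is_derive (fun s => s * Ld (S m) s) t (1 * Ld (S m) t + t * (- sumLd (S m) t))).
  { apply (d_mult (fun s => s) (Ld (S m))). apply d_id. apply Ld_derive. }
  assert (D2 : is_derive (fun s => N * (Laguerre (S m) s - Laguerre m s)) t
                 (N * (Ld (S m) t - Ld m t))).
  { apply (d_scal (fun s => Laguerre (S m) s - Laguerre m s)).
    apply (d_minus (Laguerre (S m)) (Laguerre m)); apply Lag_derive. }
  assert (E : forall s, s * Ld (S m) s = N * (Laguerre (S m) s - Laguerre m s)) by (intros; apply t_Ld).
  assert (D3 : is_derive (fun s => s * Ld (S m) s) t (N * (Ld (S m) t - Ld m t))).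
  { apply is_derive_ext with (2 := D2). intros; symmetry; apply E. }
  apply is_derive_unique in D1. apply is_derive_unique in D3.
  rewrite D1 in D3.
  assert (H4 := Ld_step m t). assert (H5 := E t).
  nra.
Qed.

Lemma Lag_0fun t : Laguerre 0 t = 1.
Proof. rewrite (Lag_LS 0 0) by lia. unfold LS. simpl. rewrite cf_n0. unfold ee. simpl. field. Qed.

Lemma deriv_cont (f : R -> R) x d : is_derive f x d -> continuity_pt f x.
Proof.
  intros H. apply derivable_continuous_pt. exists d. apply is_derive_Reals; exact H.
Qed.

Lemma d_exp2 s : is_derive (fun s => exp (-2 * s)) s (-2 * exp (-2 * s)).
Proof. auto_derive; auto. ring. Qed.

Lemma Lag_bound n t : 0 <= t -> Rabs (Laguerre n t) <= exp t.
Proof.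
  intros Ht. destruct n as [|m].
  - rewrite Lag_0fun. rewrite Rabs_R1. assert (H := exp_ineq1_le t). lra.
  - set (N := INR (S m)).
    set (y := Laguerre (S m)). set (z := Ld (S m)). set (w := fun s => - sumLd (S m) s).
    set (F := fun s => exp (-2 * s) * (N * (y s * y s) + s * (z s * z s))).
    set (dF := fun s => exp (-2 * s) * (-2 * N * (y s * y s) - z s * z s)).
    assert (HD : forall s, is_derive F s (dF s)).
    { intros s. eapply is_derive_eq.
      - apply (d_mult (fun s => exp (-2 * s)) (fun s => N * (y s * y s) + s * (z s * z s))).
        + apply d_exp2.
        + apply (d_plus (fun s => N * (y s * y s)) (fun s => s * (z s * z s))).
          * apply (d_scal (fun s => y s * y s)). apply (d_mult y y); apply Lag_derive.
          * apply (d_mult (fun s => s) (fun s => z s * z s)). apply d_id.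
            apply (d_mult z z); apply Ld_derive.
      - assert (O := ode m s). fold N y z in O |- *. unfold dF.
        replace (Laguerre (S m)) with y by reflexivity. fold z.
        assert (E : s * (- sumLd (S m) s) = - z s + s * z s - N * y s) by exact O.
        replace (Ld (S m) s) with (z s) in * by reflexivity.
        replace (s * (- sumLd (S m) s * z s + z s * - sumLd (S m) s)) with
          (2 * z s * (s * - sumLd (S m) s)) by ring.
        rewrite E. ring. }
    destruct (MVT_gen F 0 t dF) as [c [Hc Heq]].
    + intros; apply HD.
    + intros; eapply deriv_cont; apply HD.
    + rewrite Rmin_left in Hc by lra. rewrite Rmax_right in Hc by lra.
      assert (Hd : dF c <= 0).
      { unfold dF. assert (0 < exp (-2 * c)) by apply exp_pos.
        assert (0 < N) by (unfold N; apply lt_0_INR; lia).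
        assert (0 <= y c * y c) by nra. assert (0 <= z c * z c) by nra.
        assert (0 <= exp (-2 * c) * (2 * N * (y c * y c) + z c * z c)) by
          (apply Rmult_le_pos; nra).
        replace (exp (-2 * c) * (-2 * N * (y c * y c) - z c * z c)) with
          (- (exp (-2 * c) * (2 * N * (y c * y c) + z c * z c))) by ring.
        lra. }
      assert (HF0 : F 0 = N).
      { unfold F. rewrite Rmult_0_r, exp_0. unfold y. rewrite Lag_0. ring. }
      assert (HFt : F t <= N) by nra.
      assert (Hexp : exp (-2 * t) * (exp t * exp t) = 1).
      { rewrite <- !exp_plus. replace (-2 * t + (t + t)) with 0 by ring. apply exp_0. }
      assert (0 < N) by (unfold N; apply lt_0_INR; lia).
      assert (Hpos : 0 < exp t) by apply exp_pos.
      assert (0 < exp (-2 * t)) by apply exp_pos.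
      assert (0 <= t * (z t * z t)) by (apply Rmult_le_pos; nra).
      assert (Hy : y t * y t <= exp t * exp t).
      { unfold F in HFt.
        assert (0 <= exp (-2 * t) * (t * (z t * z t))) by (apply Rmult_le_pos; lra).
        assert (A : exp (-2 * t) * (N * (y t * y t)) <= N) by nra.
        assert (B : exp (-2 * t) * (y t * y t) <= 1).
        { apply (Rmult_le_reg_l N); [lra|]. nra. }
        replace (y t * y t) with ((exp (-2 * t) * (y t * y t)) * (exp t * exp t))
          by (transitivity (y t * y t * (exp (-2 * t) * (exp t * exp t)));
              [ring | rewrite Hexp; ring]).
        assert (0 < exp t * exp t) by nra. nra. }
      unfold y in Hy. rewrite <- (Rabs_right (exp t)) by lra.
      apply (Rsqr_le_abs_0 (y t) (exp t)). unfold Rsqr. exact Hy.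
Qed.

Lemma I_plus (f g : R -> R) a b (If Ig : R) : is_RInt f a b If -> is_RInt g a b Ig ->
  is_RInt (fun y => f y + g y) a b (If + Ig).
Proof. intros; apply (is_RInt_plus f g); auto. Qed.
Lemma I_minus (f g : R -> R) a b (If Ig : R) : is_RInt f a b If -> is_RInt g a b Ig ->
  is_RInt (fun y => f y - g y) a b (If - Ig).
Proof. intros; apply (is_RInt_minus f g); auto. Qed.
Lemma I_scal (f : R -> R) a b k (If : R) : is_RInt f a b If ->
  is_RInt (fun y => k * f y) a b (k * If).
Proof. intros; apply (is_RInt_scal f); auto. Qed.
Lemma I_ext (f g : R -> R) a b (l : R) : (forall x, f x = g x) -> is_RInt f a b l -> is_RInt g a b l.
Proof. intros H; apply is_RInt_ext; intros; apply H. Qed.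

Lemma I_zero a b : is_RInt (fun _ : R => 0) a b 0.
Proof.
  assert (H := is_RInt_const (V:=R_NormedModule) a b 0).
  replace (scal (b - a) (0 : R_NormedModule)) with (0:R) in H.
  exact H. unfold scal; simpl; unfold mult; simpl; ring.
Qed.

Definition PP (n : nat) (s : R) := Laguerre n s - Laguerre (S n) s.

Lemma PP_derive n s : is_derive (PP n) s (Laguerre n s).
Proof.
  eapply is_derive_eq.
  - apply (d_minus (Laguerre n) (Laguerre (S n))); apply Lag_derive.
  - assert (H := Ld_step n s). lra.
Qed.

Lemma PP_0 n : PP n 0 = 0.
Proof. unfold PP. rewrite !Lag_0. ring. Qed.

Lemma cont_of (f : R -> R) s : continuity_pt f s -> continuous f s.
Proof. intros H. apply continuity_pt_filterlim. exact H. Qed.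

Lemma cL k s : continuity_pt (Laguerre k) s.
Proof. eapply deriv_cont; apply Lag_derive. Qed.
Lemma csumL k s : continuity_pt (sumL k) s.
Proof. eapply deriv_cont; apply sumL_derive. Qed.
Lemma cPP k s : continuity_pt (PP k) s.
Proof. eapply deriv_cont; apply PP_derive. Qed.

Lemma c_refl (g : R -> R) x s : (forall u, continuity_pt g u) -> continuity_pt (fun t => g (x - t)) s.
Proof.
  intros H. apply (continuity_pt_comp (fun t => x - t) g).
  - apply continuity_pt_minus; [apply continuity_pt_const; intros ? ?; reflexivity|apply derivable_continuous_pt, derivable_pt_id].
  - apply H.
Qed.

Lemma ibp m n x :
  is_RInt (fun t => sumL m (x - t) * PP n t + Laguerre m (x - t) * Laguerre n t) 0 x (PP n x).
Proof.
  set (F := fun t => Laguerre m (x - t) * PP n t).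
  assert (HD : forall t, is_derive F t (sumL m (x - t) * PP n t + Laguerre m (x - t) * Laguerre n t)).
  { intros t. eapply is_derive_eq.
    - apply (d_mult (fun t => Laguerre m (x - t)) (PP n)).
      + apply (d_comp (Laguerre m) (fun t => x - t)). apply Lag_derive.
        apply (d_minus (fun _ => x) (fun t => t)). apply d_const. apply d_id.
      + apply PP_derive.
    - rewrite Ld_sum. ring. }
  assert (H := is_RInt_derive F _ 0 x (fun t _ => HD t)).
  replace (PP n x) with (minus (F x) (F 0)).
  - apply H. intros t _. apply cont_of.
    apply continuity_pt_plus; apply continuity_pt_mult.
    + apply c_refl. apply csumL.
    + apply cPP.
    + apply c_refl. apply cL.
    + apply cL.
  - unfold F. rewrite Rminus_0_r, Rminus_diag, PP_0, Lag_0. unfold minus, plus, opp; simpl. ring.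
Qed.

Lemma conv_all m : forall n x,
  is_RInt (fun t => Laguerre m (x - t) * Laguerre n t) 0 x (PP (m + n) x).
Proof.
  induction m as [m IH] using lt_wf_ind. intros n x.
  assert (HS : forall m', (m' <= m)%nat -> forall n,
     is_RInt (fun t => sumL m' (x - t) * PP n t) 0 x (PP n x - PP (m' + n) x)).
  { induction m' as [|m' IHm]; intros Hm n'.
    - simpl. apply I_ext with (f := fun _ => 0).
      + intros; ring.
      + replace (PP n' x - PP n' x) with 0 by ring. apply I_zero.
    - simpl.
      apply I_ext with (f := fun t => sumL m' (x - t) * PP n' t +
          (Laguerre m' (x - t) * Laguerre n' t - Laguerre m' (x - t) * Laguerre (S n') t)).
      + intros t. unfold PP. ring.
      + replace (PP n' x - PP (S (m' + n')) x) with
          ((PP n' x - PP (m' + n') x) + (PP (m' + n') x - PP (m' + S n') x)).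
        * apply I_plus. apply IHm; lia. apply I_minus; apply IH; lia.
        * rewrite Nat.add_succ_r. ring. }
  apply I_ext with (f := fun t => (sumL m (x - t) * PP n t + Laguerre m (x - t) * Laguerre n t)
                              - sumL m (x - t) * PP n t).
  - intros; ring.
  - replace (PP (m + n) x) with (PP n x - (PP n x - PP (m + n) x)) by ring.
    apply I_minus. apply ibp. apply HS; lia.
Qed.

Lemma exs_le (a b : nat -> R) : (forall n, Rabs (a n) <= b n) -> ex_series b -> ex_series a.
Proof. intros H Hb. apply (ex_series_le a b); auto. Qed.

Lemma exs_tail (a : nat -> R) n : ex_series a -> ex_series (fun k => a (n + k)%nat).
Proof. intros H. apply (ex_series_incr_n a n). exact H. Qed.

Lemma Series_split (a : nat -> R) N : ex_series a ->
  Series a = sum_f_R0 a N + Series (fun k => a (S N + k)%nat).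
Proof. intros H. rewrite (Series_incr_n a (S N)) by (auto; lia). reflexivity. Qed.

Lemma tail_lim (a : nat -> R) : ex_series a -> forall eps : posreal,
  exists N0, forall N, (N0 <= N)%nat -> Rabs (Series (fun k => a (S N + k)%nat)) < eps.
Proof.
  intros H eps.
  assert (Hs : is_lim_seq (sum_n a) (Series a)) by exact (Series_correct a H).
  apply is_lim_seq_spec in Hs. destruct (Hs eps) as [N0 HN0].
  exists N0. intros N HN. specialize (HN0 N HN).
  rewrite sum_n_Reals in HN0. rewrite (Series_split a N H) in HN0.
  replace (sum_f_R0 a N - (sum_f_R0 a N + Series (fun k => a (S N + k)%nat))) with
    (- Series (fun k => a (S N + k)%nat)) in HN0 by ring.
  rewrite Rabs_Ropp in HN0. exact HN0.
Qed.

Lemma tail_bound (a : nat -> R) N : ex_series (fun n => Rabs (a n)) ->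
  Rabs (Series a - sum_f_R0 a N) <= Series (fun k => Rabs (a (S N + k)%nat)).
Proof.
  intros H. rewrite (Series_split a N (ex_series_Rabs a H)).
  replace (sum_f_R0 a N + Series (fun k => a (S N + k)%nat) - sum_f_R0 a N) with
    (Series (fun k => a (S N + k)%nat)) by ring.
  apply Series_Rabs. apply (exs_tail (fun n => Rabs (a n))). exact H.
Qed.

Lemma exs_scal (k : R) (a : nat -> R) : ex_series a -> ex_series (fun n => k * a n).
Proof.
  intros H. apply ex_series_ext with (a := fun n => a n * k).
  - intros; apply Rmult_comm.
  - apply ex_series_scal_r; exact H.
Qed.

Lemma int_series (c : nat -> R) (g : nat -> R -> R) (J : nat -> R) (x M : R) :
  0 <= x -> ex_series (fun m => Rabs (c m)) ->
  (forall m t, 0 <= t <= x -> Rabs (g m t) <= M) ->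
  (forall m, is_RInt (g m) 0 x (J m)) ->
  exists I, is_RInt (fun t => Series (fun m => c m * g m t)) 0 x I /\
            is_series (fun m => c m * J m) I.
Proof.
  intros Hx Hc Hg HJ.
  set (cl := fun t => Rmax 0 (Rmin x t)).
  assert (Hcl : forall t, 0 <= cl t <= x).
  { intros t; unfold cl. split; [apply Rmax_l|]. apply Rmax_lub; [lra|apply Rmin_l]. }
  assert (Hcl2 : forall t, Rmin 0 x < t < Rmax 0 x -> cl t = t).
  { intros t Ht. rewrite Rmin_left, Rmax_right in Ht by lra. unfold cl.
    rewrite Rmin_right by lra. rewrite Rmax_right by lra. reflexivity. }
  assert (HM : 0 <= M).
  { apply Rle_trans with (Rabs (g 0%nat 0)); [apply Rabs_pos|apply Hg; lra]. }
  set (fN := fun N t => sum_n (fun m => c m * g m (cl t)) N).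
  set (glim := fun t => Series (fun m => c m * g m (cl t))).
  set (hN := fun N => sum_n (fun m => c m * J m) N).
  assert (Hex : forall s, ex_series (fun m => Rabs (c m * g m (cl s)))).
  { intros s. apply exs_le with (b := fun m => M * Rabs (c m)).
    - intros m. rewrite Rabs_Rabsolu, Rabs_mult.
      rewrite Rmult_comm. apply Rmult_le_compat_r; [apply Rabs_pos|]. apply Hg, Hcl.
    - apply exs_scal. exact Hc. }
  assert (H1 : forall N, is_RInt (fN N) 0 x (hN N)).
  { intros N. unfold fN, hN. rewrite sum_n_Reals.
    apply I_ext with (f := fun t => sum_f_R0 (fun m => c m * g m (cl t)) N).
    { intros t; rewrite sum_n_Reals; reflexivity. }
    assert (Ht : forall m, is_RInt (fun t => c m * g m (cl t)) 0 x (c m * J m)).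
    { intros m. apply I_scal. apply is_RInt_ext with (f := g m).
      - intros t Ht. rewrite Hcl2; auto.
      - apply HJ. }
    induction N as [|N IH]; simpl.
    - apply Ht.
    - apply (I_plus (fun t => sum_f_R0 (fun m => c m * g m (cl t)) N)
                    (fun t => c (S N) * g (S N) (cl t))); auto. }
  edestruct (filterlim_RInt fN 0 x eventually eventually_filter glim hN H1) as [If [HIf1 HIf2]].
  { apply (proj2 (filterlim_locally fN glim)). intros eps.
    assert (Heps' : 0 < eps / (M + 1)).
    { apply Rdiv_lt_0_compat; [apply cond_pos|lra]. }
    destruct (tail_lim _ Hc (mkposreal _ Heps')) as [N0 HN0].
    exists N0. intros N HN. intros t. specialize (HN0 N HN).
    change (pos (mkposreal _ Heps')) with (eps / (M+1)) in HN0.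
    change (Rabs (fN N t - glim t) < eps).
    unfold fN, glim. rewrite sum_n_Reals. rewrite <- Rabs_Ropp.
    replace (- (sum_f_R0 (fun m => c m * g m (cl t)) N - Series (fun m => c m * g m (cl t))))
      with (Series (fun m => c m * g m (cl t)) - sum_f_R0 (fun m => c m * g m (cl t)) N) by ring.
    eapply Rle_lt_trans; [apply tail_bound, Hex|].
    apply Rle_lt_trans with (M * Series (fun k => Rabs (c (S N + k)%nat))).
    - rewrite <- Series_scal_l. apply Series_le.
      + intros k. split; [apply Rabs_pos|]. rewrite Rabs_mult, Rmult_comm.
        apply Rmult_le_compat_r; [apply Rabs_pos|]. apply Hg, Hcl.
      + apply exs_scal. apply (exs_tail (fun m => Rabs (c m))). exact Hc.
    - set (S0 := Series (fun k => Rabs (c (S N + k)%nat))) in *.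
      assert (S0 <= Rabs S0) by apply Rle_abs.
      assert (M * S0 <= M * (eps / (M + 1))).
      { apply Rmult_le_compat_l; [lra|]. lra. }
      assert (M * (eps / (M + 1)) < eps).
      { assert (Hp := cond_pos eps).
        replace (M * (eps / (M + 1))) with (eps * (M / (M + 1))) by (field; lra).
        assert (M / (M + 1) < 1).
        { apply (Rmult_lt_reg_r (M + 1)); [lra|]. field_simplify; lra. }
        nra. }
      lra. }
  exists If. split.
  - apply is_RInt_ext with (f := glim); [|exact HIf2].
    intros t Ht. unfold glim. rewrite Hcl2; auto.
  - exact HIf1.
Qed.

Lemma tri_sum (F : nat -> nat -> R) K :
  sum_f_R0 (fun k => sum_f_R0 (fun n => F n (k - n)%nat) k) K =
  sum_f_R0 (fun n => sum_f_R0 (F n) (K - n)%nat) K.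
Proof.
  induction K as [|K IH].
  - reflexivity.
  - change (sum_f_R0 (fun k => sum_f_R0 (fun n => F n (k - n)%nat) k) (S K)) with
      (sum_f_R0 (fun k => sum_f_R0 (fun n => F n (k - n)%nat) k) K +
       sum_f_R0 (fun n => F n (S K - n)%nat) (S K)).
    rewrite IH.
    change (sum_f_R0 (fun n => sum_f_R0 (F n) (S K - n)%nat) (S K)) with
      (sum_f_R0 (fun n => sum_f_R0 (F n) (S K - n)%nat) K +
       sum_f_R0 (F (S K)) (S K - S K)%nat).
    rewrite Nat.sub_diag.
    change (sum_f_R0 (fun n => F n (S K - n)%nat) (S K)) with
      (sum_f_R0 (fun n => F n (S K - n)%nat) K + F (S K) (S K - S K)%nat).
    rewrite Nat.sub_diag.
    rewrite (sum_ext_le (fun n => sum_f_R0 (F n) (S K - n)%nat)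
              (fun n => sum_f_R0 (F n) (K - n)%nat + F n (S K - n)%nat)).
    + rewrite plus_sum. simpl. ring.
    + intros n Hn. replace (S K - n)%nat with (S (K - n)) by lia. simpl.
      reflexivity.
Qed.

Lemma sum_abs_le (f : nat -> R) N : Rabs (sum_f_R0 f N) <= sum_f_R0 (fun n => Rabs (f n)) N.
Proof. apply sum_f_R0_triangle. Qed.

Lemma sum_le_gen (f g : nat -> R) N : (forall n, (n <= N)%nat -> f n <= g n) ->
  sum_f_R0 f N <= sum_f_R0 g N.
Proof.
  induction N as [|N IH]; intros H; simpl.
  - apply H; lia.
  - apply Rplus_le_compat; [apply IH; intros; apply H; lia| apply H; lia].
Qed.

Lemma Series_nonneg (a : nat -> R) : (forall n, 0 <= a n) -> ex_series a -> 0 <= Series a.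
Proof.
  intros H Ha. apply Rle_trans with (Series (fun n => 0 * a n)).
  - rewrite Series_scal_l. lra.
  - apply Series_le; auto. intros n; rewrite Rmult_0_l; split; [lra|]. apply H.
Qed.

Lemma sum_scal_l (k : R) (f : nat -> R) N : sum_f_R0 (fun j => k * f j) N = k * sum_f_R0 f N.
Proof. induction N as [|N IH]; simpl; [ring|rewrite IH; ring]. Qed.

Lemma tri_fubini (F : nat -> nat -> R) (U V : nat -> R) :
  (forall n, 0 <= U n) -> (forall j, 0 <= V j) -> ex_series U -> ex_series V ->
  (forall n j, Rabs (F n j) <= U n * V j) ->
  is_series (fun k => sum_f_R0 (fun n => F n (k - n)%nat) k)
            (Series (fun n => Series (fun j => F n j))).
Proof.
  intros HU HV EU EV HF.
  set (SU := Series U). set (SV := Series V).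
  set (T := fun n => Series (fun j => F n j)).
  assert (EF : forall n, ex_series (fun j => Rabs (F n j))).
  { intros n. apply exs_le with (b := fun j => U n * V j).
    - intros j. rewrite Rabs_Rabsolu. apply HF.
    - apply exs_scal, EV. }
  assert (Hb : forall n m, Rabs (T n - sum_f_R0 (F n) m) <= U n * (SV - sum_f_R0 V m)).
  { intros n m. unfold T. eapply Rle_trans; [apply tail_bound, EF|].
    unfold SV. rewrite (Series_split V m EV).
    replace (sum_f_R0 V m + Series (fun k => V (S m + k)%nat) - sum_f_R0 V m)
      with (Series (fun k => V (S m + k)%nat)) by ring.
    rewrite <- Series_scal_l. apply Series_le.
    - intros k; split; [apply Rabs_pos|apply HF].
    - apply exs_scal, exs_tail, EV. }
  assert (Hc : forall n, Rabs (T n) <= U n * SV).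
  { intros n. specialize (Hb n 0%nat). simpl in Hb.
    assert (Hf0 := HF n 0%nat). assert (HV0 := HV 0%nat).
    assert (HU0 := HU n).
    assert (Rabs (T n) <= Rabs (T n - F n 0%nat) + Rabs (F n 0%nat)).
    { replace (T n) with ((T n - F n 0%nat) + F n 0%nat) at 1 by ring.
      apply Rabs_triang. }
    nra. }
  assert (ET : ex_series (fun n => Rabs (T n))).
  { apply exs_le with (b := fun n => U n * SV).
    - intros n. rewrite Rabs_Rabsolu. apply Hc.
    - apply ex_series_scal_r, EU. }
  set (L := Series T).
  assert (HC : is_series (fun k => sum_f_R0 (fun n => U n * V (k - n)%nat) k) (SU * SV)).
  { apply is_series_mult.
    - apply Series_correct, EU.
    - apply Series_correct, EV.
    - apply ex_series_ext with (a := U); [intros; rewrite Rabs_right; auto; apply Rle_ge, HU|exact EU].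
    - apply ex_series_ext with (a := V); [intros; rewrite Rabs_right; auto; apply Rle_ge, HV|exact EV]. }
  assert (Hbound : forall K, Rabs (sum_f_R0 (fun k => sum_f_R0 (fun n => F n (k - n)%nat) k) K - L)
     <= SU * SV - sum_f_R0 (fun k => sum_f_R0 (fun n => U n * V (k - n)%nat) k) K).
  { intros K. rewrite !tri_sum.
    assert (E1 : L = sum_f_R0 T K + Series (fun k => T (S K + k)%nat)).
    { unfold L. apply Series_split. apply ex_series_Rabs, ET. }
    assert (E2 : SU = sum_f_R0 U K + Series (fun k => U (S K + k)%nat)).
    { unfold SU. apply Series_split, EU. }
    assert (B1 : Rabs (Series (fun k => T (S K + k)%nat)) <= SV * Series (fun k => U (S K + k)%nat)).
    { eapply Rle_trans; [apply Series_Rabs, (exs_tail (fun n => Rabs (T n))), ET|].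
      rewrite <- Series_scal_l. apply Series_le.
      - intros k; split; [apply Rabs_pos|]. rewrite Rmult_comm. apply Hc.
      - apply exs_scal, exs_tail, EU. }
    assert (B2 : Rabs (sum_f_R0 (fun n => sum_f_R0 (F n) (K - n)%nat) K - sum_f_R0 T K)
        <= sum_f_R0 (fun n => U n * (SV - sum_f_R0 V (K - n)%nat)) K).
    { rewrite <- minus_sum. eapply Rle_trans; [apply sum_abs_le|].
      apply sum_le_gen. intros n _. rewrite <- Rabs_Ropp.
      replace (- (sum_f_R0 (F n) (K - n) - T n)) with (T n - sum_f_R0 (F n) (K - n)) by ring.
      apply Hb. }
    assert (E3 : sum_f_R0 (fun n => U n * (SV - sum_f_R0 V (K - n)%nat)) K =
                 SV * sum_f_R0 U K - sum_f_R0 (fun n => sum_f_R0 (fun j => U n * V j) (K - n)%nat) K).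
    { rewrite scal_sum, <- minus_sum. apply sum_ext_le. intros n _.
      rewrite sum_scal_l. ring. }
    replace (sum_f_R0 (fun n => sum_f_R0 (fun j => U n * V j) (K - n)%nat) K) with
      (sum_f_R0 (fun n => sum_f_R0 (fun j => U n * V j) (K - n)%nat) K) in E3 by reflexivity.
    rewrite E3 in B2.
    rewrite E1.
    replace (sum_f_R0 (fun n => sum_f_R0 (F n) (K - n)%nat) K - (sum_f_R0 T K + Series (fun k => T (S K + k)%nat)))
      with ((sum_f_R0 (fun n => sum_f_R0 (F n) (K - n)%nat) K - sum_f_R0 T K) - Series (fun k => T (S K + k)%nat)) by ring.
    eapply Rle_trans; [apply Rabs_triang|]. rewrite Rabs_Ropp.
    rewrite E2 at 1.
    assert (E4 : sum_f_R0 (fun k => sum_f_R0 (fun n => U n * V (k - n)%nat) k) K =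
                 sum_f_R0 (fun n => sum_f_R0 (fun j => U n * V j) (K - n)%nat) K)
      by exact (tri_sum (fun n j => U n * V j) K).
    rewrite E4. lra. }
  unfold is_series.
  change (is_lim_seq (sum_n (fun k => sum_f_R0 (fun n => F n (k - n)%nat) k)) L).
  apply is_lim_seq_spec. intros eps.
  assert (HC' : is_lim_seq (sum_n (fun k => sum_f_R0 (fun n => U n * V (k - n)%nat) k)) (SU * SV)) by exact HC.
  apply is_lim_seq_spec in HC'. destruct (HC' eps) as [N0 HN0].
  exists N0. intros K HK. specialize (HN0 K HK). rewrite sum_n_Reals in *.
  specialize (Hbound K).
  assert (Hr := Rle_abs (SU * SV - sum_f_R0 (fun k => sum_f_R0 (fun n => U n * V (k - n)%nat) k) K)).
  rewrite <- Rabs_Ropp in Hr.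
  replace (- (SU * SV - sum_f_R0 (fun k => sum_f_R0 (fun n => U n * V (k - n)%nat) k) K))
    with (sum_f_R0 (fun k => sum_f_R0 (fun n => U n * V (k - n)%nat) k) K - SU * SV) in Hr by ring.
  lra.
Qed.

Definition phi (m : nat) (t : R) := exp (- t / 2) * Laguerre m t.

Lemma phi_bound m t x : 0 <= t <= x -> Rabs (phi m t) <= exp x.
Proof.
  intros Ht. unfold phi. rewrite Rabs_mult, Rabs_right by (apply Rle_ge, Rlt_le, exp_pos).
  assert (H1 : exp (- t / 2) <= 1).
  { rewrite <- exp_0. destruct (Req_dec t 0) as [->|Hne].
    - replace (- 0 / 2) with 0 by field. lra.
    - apply Rlt_le, exp_increasing. lra. }
  assert (H2 := Lag_bound m t (proj1 Ht)).
  assert (H3 : exp t <= exp x).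
  { destruct (Req_dec t x) as [->|Hne]; [lra|]. apply Rlt_le, exp_increasing; lra. }
  assert (0 <= Rabs (Laguerre m t)) by apply Rabs_pos.
  assert (0 < exp (- t / 2)) by apply exp_pos.
  nra.
Qed.

Lemma wLag_phi a t : wLag a t = Series (fun m => a m * phi m t).
Proof.
  unfold wLag, phi. rewrite <- Series_scal_l. apply Series_ext. intros; ring.
Qed.

Lemma wLag_bound a t x : ex_series (fun m => Rabs (a m)) -> 0 <= t <= x ->
  Rabs (wLag a t) <= Series (fun m => Rabs (a m)) * exp x.
Proof.
  intros Ha Ht. rewrite wLag_phi.
  assert (Hex : ex_series (fun m => Rabs (a m * phi m t))).
  { apply exs_le with (b := fun m => Rabs (a m) * exp x).
    - intros m. rewrite Rabs_Rabsolu, Rabs_mult. apply Rmult_le_compat_l; [apply Rabs_pos|].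
      apply phi_bound; auto.
    - apply ex_series_scal_r, Ha. }
  eapply Rle_trans; [apply Series_Rabs, Hex|].
  rewrite <- Series_scal_r. apply Series_le.
  - intros m; split; [apply Rabs_pos|]. rewrite Rabs_mult. apply Rmult_le_compat_l; [apply Rabs_pos|].
    apply phi_bound; auto.
  - apply ex_series_scal_r, Ha.
Qed.

Lemma Series_fin (u : nat -> R) k : (forall n, (k < n)%nat -> u n = 0) ->
  is_series u (sum_f_R0 u k).
Proof.
  intros H. unfold is_series.
  change (is_lim_seq (sum_n u) (sum_f_R0 u k)).
  apply is_lim_seq_ext_loc with (u := fun _ => sum_f_R0 u k).
  - exists k. intros n Hn. rewrite sum_n_Reals. symmetry. apply sum_zero_ext; auto.
  - apply is_lim_seq_const.
Qed.

Lemma exp_split x t : exp (- (x - t) / 2) * exp (- t / 2) = exp (- x / 2).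
Proof. rewrite <- exp_plus. f_equal. field. Qed.

Lemma stepA a x n : ex_series (fun m => Rabs (a m)) -> 0 <= x ->
  is_RInt (fun t => wLag a (x - t) * phi n t) 0 x
          (exp (- x / 2) * Series (fun m => a m * PP (m + n) x)).
Proof.
  intros Ha Hx.
  destruct (int_series a (fun m t => phi m (x - t) * phi n t)
              (fun m => exp (- x / 2) * PP (m + n) x) x (exp x * exp x) Hx Ha)
    as [I [HI HS]].
  - intros m t Ht. rewrite Rabs_mult.
    assert (0 <= Rabs (phi m (x - t))) by apply Rabs_pos.
    assert (0 <= Rabs (phi n t)) by apply Rabs_pos.
    assert (Rabs (phi m (x - t)) <= exp x) by (apply phi_bound; lra).
    assert (Rabs (phi n t) <= exp x) by (apply phi_bound; lra).
    nra.
  - intros m. apply I_ext with (f := fun t => exp (- x / 2) * (Laguerre m (x - t) * Laguerre n t)).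
    + intros t. unfold phi. rewrite <- (exp_split x t). ring.
    + apply I_scal, conv_all.
  - apply is_series_unique in HS.
    rewrite (Series_ext _ (fun m => exp (- x / 2) * (a m * PP (m + n) x))) in HS by (intros; ring).
    rewrite Series_scal_l in HS. rewrite HS.
    apply I_ext with (2 := HI). intros t.
    rewrite wLag_phi, <- Series_scal_r. apply Series_ext. intros; ring.
Qed.

Lemma stepB a b x : ex_series (fun m => Rabs (a m)) -> ex_series (fun m => Rabs (b m)) -> 0 <= x ->
  is_RInt (fun t => wLag a (x - t) * wLag b t) 0 x
    (exp (- x / 2) * Series (fun n => b n * Series (fun m => a m * PP (m + n) x))).
Proof.
  intros Ha Hb Hx.
  destruct (int_series b (fun n t => wLag a (x - t) * phi n t)
              (fun n => exp (- x / 2) * Series (fun m => a m * PP (m + n) x)) x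
              ((Series (fun m => Rabs (a m)) * exp x) * exp x) Hx Hb)
    as [I [HI HS]].
  - intros n t Ht. rewrite Rabs_mult.
    assert (0 <= Rabs (wLag a (x - t))) by apply Rabs_pos.
    assert (0 <= Rabs (phi n t)) by apply Rabs_pos.
    assert (Rabs (wLag a (x - t)) <= Series (fun m => Rabs (a m)) * exp x) by (apply wLag_bound; auto; lra).
    assert (Rabs (phi n t) <= exp x) by (apply phi_bound; lra).
    nra.
  - intros n. apply stepA; auto.
  - apply is_series_unique in HS.
    rewrite (Series_ext _ (fun n => exp (- x / 2) * (b n * Series (fun m => a m * PP (m + n) x)))) in HS by (intros; ring).
    rewrite Series_scal_l in HS. rewrite HS.
    apply I_ext with (2 := HI). intros t.
    rewrite (wLag_phi b), <- Series_scal_l. apply Series_ext. intros; ring.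
Qed.

Lemma ext0_nat a j : ext0 a (Z.of_nat j) = a j.
Proof.
  unfold ext0. destruct (Z.ltb_spec (Z.of_nat j) 0); [lia|]. rewrite Nat2Z.id. reflexivity.
Qed.

Lemma ext0_neg a z : (z < 0)%Z -> ext0 a z = 0.
Proof. intros H. unfold ext0. destruct (Z.ltb_spec z 0); [reflexivity|lia]. Qed.

Definition ea (a : nat -> R) (j : nat) := ext0 a (Z.of_nat j) - ext0 a (Z.of_nat j - 1).

Lemma Lmul_ex a x n : ex_series (fun m => Rabs (a m)) -> 0 <= x ->
  ex_series (fun m => a m * Laguerre (n m) x) .
Proof. Abort.

Lemma ex_bounded (a : nat -> R) (f : nat -> R) B : ex_series (fun m => Rabs (a m)) ->
  (forall m, Rabs (f m) <= B) -> ex_series (fun m => a m * f m).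
Proof.
  intros Ha Hf. apply exs_le with (b := fun m => Rabs (a m) * B).
  - intros m. rewrite Rabs_mult. apply Rmult_le_compat_l; [apply Rabs_pos|apply Hf].
  - apply ex_series_scal_r, Ha.
Qed.

Lemma Qn a x n : ex_series (fun m => Rabs (a m)) -> 0 <= x ->
  Series (fun m => a m * PP (m + n) x) = Series (fun j => ea a j * Laguerre (n + j) x).
Proof.
  intros Ha Hx.
  assert (HL : forall k, Rabs (Laguerre k x) <= exp x) by (intros; apply Lag_bound; auto).
  set (W := fun j => ext0 a (Z.of_nat j - 1) * Laguerre (n + j) x).
  assert (EW1 : ex_series (fun k => W (S k))).
  { apply ex_series_ext with (a := fun k => a k * Laguerre (n + S k) x).
    - intros k. unfold W. f_equal. replace (Z.of_nat (S k) - 1)%Z with (Z.of_nat k) by lia.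
      symmetry; apply ext0_nat.
    - apply ex_bounded with (B := exp x); auto. }
  assert (EW : ex_series W) by (apply (ex_series_incr_1 W); exact EW1).
  assert (E1 : ex_series (fun m => a m * Laguerre (m + n) x)) by (apply ex_bounded with (B := exp x); auto).
  assert (E2 : ex_series (fun m => a m * Laguerre (S (m + n)) x)) by (apply ex_bounded with (B := exp x); auto).
  rewrite (Series_ext _ (fun m => a m * Laguerre (m + n) x - a m * Laguerre (S (m + n)) x))
    by (intros; unfold PP; ring).
  rewrite Series_minus by auto.
  rewrite (Series_ext (fun j => ea a j * Laguerre (n + j) x) (fun j => a j * Laguerre (j + n) x - W j)).
  2:{ intros j. unfold ea, W. rewrite ext0_nat, Nat.add_comm. ring. }
  rewrite Series_minus by auto.
  f_equal. rewrite (Series_incr_1 W EW).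
  unfold W at 1. simpl Z.of_nat. rewrite ext0_neg by lia. rewrite Rmult_0_l, Rplus_0_l.
  apply Series_ext. intros k. unfold W. replace (Z.of_nat (S k) - 1)%Z with (Z.of_nat k) by lia.
  rewrite ext0_nat. f_equal. f_equal. lia.
Qed.

Lemma RL_ea a k n : (n <= k)%nat -> RL a k n = ea a (k - n).
Proof.
  intros H. unfold RL, ea. rewrite Nat2Z.inj_sub by lia. reflexivity.
Qed.

Lemma RL_zero a k n : (k < n)%nat -> RL a k n = 0.
Proof.
  intros H. unfold RL. rewrite !ext0_neg by lia. ring.
Qed.

Lemma RLmul_fin a b k : RLmul a b k = sum_f_R0 (fun n => RL a k n * b n) k.
Proof.
  unfold RLmul. apply is_series_unique, Series_fin.
  intros n Hn. rewrite RL_zero by lia. ring.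
Qed.

Lemma stepC a b x : ex_series (fun m => Rabs (a m)) -> ex_series (fun m => Rabs (b m)) -> 0 <= x ->
  is_series (fun k => RLmul a b k * Laguerre k x)
            (Series (fun n => b n * Series (fun m => a m * PP (m + n) x))).
Proof.
  intros Ha Hb Hx.
  assert (HL : forall k, Rabs (Laguerre k x) <= exp x) by (intros; apply Lag_bound; auto).
  set (F := fun n j => b n * (ea a j * Laguerre (n + j) x)).
  assert (EV : ex_series (fun j => Rabs (ea a j))).
  { set (W := fun j => Rabs (ext0 a (Z.of_nat j - 1))).
    assert (EW : ex_series W).
    { apply (ex_series_incr_1 W). apply ex_series_ext with (a := fun k => Rabs (a k)); auto.
      intros k. unfold W. replace (Z.of_nat (S k) - 1)%Z with (Z.of_nat k) by lia.
      rewrite ext0_nat. reflexivity. }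
    apply exs_le with (b := fun j => Rabs (a j) + W j).
    - intros j. rewrite Rabs_Rabsolu. unfold ea, W. rewrite ext0_nat.
      unfold Rminus. eapply Rle_trans; [apply Rabs_triang|]. rewrite Rabs_Ropp. lra.
    - apply (ex_series_plus (fun j => Rabs (a j)) W); auto. }
  assert (HT : is_series (fun k => sum_f_R0 (fun n => F n (k - n)%nat) k)
            (Series (fun n => Series (fun j => F n j)))).
  { apply tri_fubini with (U := fun n => Rabs (b n) * exp x) (V := fun j => Rabs (ea a j)).
    - intros n. apply Rmult_le_pos; [apply Rabs_pos|apply Rlt_le, exp_pos].
    - intros j. apply Rabs_pos.
    - apply ex_series_scal_r, Hb.
    - exact EV.
    - intros n j. unfold F. rewrite !Rabs_mult.
      assert (0 <= Rabs (b n)) by apply Rabs_pos.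
      assert (0 <= Rabs (ea a j)) by apply Rabs_pos.
      specialize (HL (n + j)%nat).
      replace (Rabs (b n) * exp x * Rabs (ea a j)) with (Rabs (b n) * (Rabs (ea a j) * exp x)) by ring.
      apply Rmult_le_compat_l; auto. apply Rmult_le_compat_l; auto. }
  replace (Series (fun n => b n * Series (fun m => a m * PP (m + n) x))) with
    (Series (fun n => Series (fun j => F n j))).
  - apply is_series_ext with (2 := HT). intros k.
    rewrite RLmul_fin, Rmult_comm, scal_sum. apply sum_ext_le. intros n Hn.
    unfold F. rewrite RL_ea by lia. replace (n + (k - n))%nat with k by lia. ring.
  - apply Series_ext. intros n. unfold F. rewrite Series_scal_l. f_equal.
    symmetry. apply Qn; auto.
Qed.

Theorem theorem5p2 (a b : nat -> R)
  (ha : ex_series (fun m => Rabs (a m)))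
  (hb : ex_series (fun n => Rabs (b n)))
  (x : R) (hx : 0 <= x) :
  ex_RInt (fun t => wLag a (x - t) * wLag b t) 0 x /\
  ex_series (fun k => RLmul a b k * Laguerre k x) /\
  RInt (fun t => wLag a (x - t) * wLag b t) 0 x
    = exp (- x / 2) * Series (fun k => RLmul a b k * Laguerre k x).
Proof.
  assert (HB := stepB a b x ha hb hx). assert (HC := stepC a b x ha hb hx).
  split; [eexists; exact HB|]. split; [eexists; exact HC|].
  rewrite (is_RInt_unique _ _ _ _ HB). f_equal. symmetry. apply is_series_unique. exact HC.
Qed.
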